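(* Let $X,Y\in\mathcal{P}$ be partitions of a dataset $\mathcal{Z}$ with $m$ elements. The matrix $\mathbf{C}(X,Y)=(m_{pq})_{p,q\in\{0,1\}}$ satisfies: (1) if $X,Y\in\mathcal{P}^+$, then $\mathbf{C}^+(X,Y)=\mathbf{C}(X,Y)$; (2) $m_{pq}\ge0$ for all $p,q\in\{0,1\}$; (3) $\sum_{p,q}m_{pq}=N$, where $N=m(m-1)/2$.
   Context: Let $\mathcal{Z}=\{z_1,\dots,z_m\}$, $1\le\ell\le m$, $\mathcal{X} = \{\mathbf{X}\in[0,1]^{\ell\times m} : \mathbf{X}^T\mathbf{1}_\ell = \mathbf{1}_m\}$, and let $\mathcal{P}=\mathcal{X}/\Pi$ be the set of orbits $X=\{\mathbf{P}\mathbf{X}:\mathbf{P}$ an $\ell\times\ell$ permutation matrix$\}$ (partitions); entry $x_{kj}$ is the membership of $z_j$ in cluster $k$. $\mathcal{P}^+$ is the set of hard partitions, those represented by matrices in $\{0,1\}^{\ell\times m}$; a hard partition $X$ induces the relation $z\sim_X z'$ iff $z,z'$ lie in the same cluster. For hard $X,Y$, $\mathbf{C}^+(X,Y)=(m^+_{pq})$ is the $2\times2$ matrix where $m^+_{11}$, $m^+_{10}$, $m^+_{01}$, $m^+_{00}$ count the 2-element subsets $\{z,z'\}\subseteq\mathcal{Z}$ with, respectively, ($z\sim_Xz'$, $z\sim_Yz'$), ($z\sim_Xz'$, $z\not\sim_Yz'$), ($z\not\sim_Xz'$, $z\sim_Yz'$), ($z\not\sim_Xz'$, $z\not\sim_Yz'$).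 For any $X\in\mathcal{P}$ the compatibility matrix is $\mathbf{C}_X=\mathbf{X}^T\mathbf{X}$ for any representative $\mathbf{X}\in X$. For $m\times m$ matrices $\mathbf{A}=(a_{rs}),\mathbf{B}=(b_{rs})$ let $\chi(\mathbf{A},\mathbf{B})=\sum_{r=1}^m\sum_{s=r+1}^m a_{rs}b_{rs}$, and let $\mathbf{1}$ be the $m\times m$ all-ones matrix. Define $\mathbf{C}(X,Y)=(m_{pq})$ by $m_{11}=\chi(\mathbf{C}_X,\mathbf{C}_Y)$, $m_{10}=\chi(\mathbf{C}_X,\mathbf{1}-\mathbf{C}_Y)$, $m_{01}=\chi(\mathbf{1}-\mathbf{C}_X,\mathbf{C}_Y)$, $m_{00}=\chi(\mathbf{1}-\mathbf{C}_X,\mathbf{1}-\mathbf{C}_Y)$. *)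

(* Defs.v *)
From mathcomp Require Import all_boot all_order all_algebra.
Set Implicit Arguments. Unset Strict Implicit. Unset Printing Implicit Defensive.
Import Order.TTheory GRing.Theory Num.Theory.
Local Open Scope ring_scope.

Section Defs.
Variable R : realFieldType.
Variables l m : nat.

(* A matrix representative of a (soft) partition of {z_0,...,z_(m-1)} into l clusters. *)
Definition is_partition (X : 'M[R]_(l, m)) : Prop :=
  (forall k j, 0 <= X k j <= 1) /\ (forall j, \sum_(k < l) X k j = 1).

Definition is_hard (X : 'M[R]_(l, m)) : Prop :=
  forall k j, X k j = 0 \/ X k j = 1.

Definition same_cluster (X : 'M[R]_(l, m)) (i j : 'I_m) : bool :=
  [exists k, (X k i == 1) && (X k j == 1)].

(* C^+(X,Y) : entry (p,q), p,q in {1,0} encoded as true/false; 2-element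
   subsets {z_i, z_j} are enumerated as pairs (i,j) with i < j. *)
Definition Cplus (X Y : 'M[R]_(l, m)) (p q : bool) : nat :=
  #|[set ij : 'I_m * 'I_m | [&& (ij.1 < ij.2)%N,
        same_cluster X ij.1 ij.2 == p & same_cluster Y ij.1 ij.2 == q]]|.

Definition compat (X : 'M[R]_(l, m)) : 'M[R]_m := X^T *m X.

Definition chi (A B : 'M[R]_m) : R :=
  \sum_(r < m) \sum_(s < m | (r < s)%N) A r s * B r s.

Definition onesmx : 'M[R]_m := const_mx 1.

(* C(X,Y) : entry (p,q), p,q in {1,0} encoded as true/false. *)
Definition Cmat (X Y : 'M[R]_(l, m)) (p q : bool) : R :=
  chi (if p then compat X else onesmx - compat X)
      (if q then compat Y else onesmx - compat Y).
End Defs.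

(* Main.v *)
Require Import Defs.
From mathcomp Require Import all_boot all_order all_algebra.
From mathcomp Require Import ring lra zify.
Import Order.TTheory GRing.Theory Num.Theory.
Local Open Scope ring_scope.

Lemma compat_bounds (R : realFieldType) (l m : nat) (X : 'M[R]_(l, m)) r s :
  is_partition X -> 0 <= compat X r s <= 1.
Proof.
move=> [H01 Hs]; rewrite /compat !mxE; apply/andP; split.
  apply: sumr_ge0 => k _; rewrite mxE.
  by have /andP[a _] := H01 k r; have /andP[b _] := H01 k s; apply: mulr_ge0.
rewrite -(Hs r); apply: ler_sum => k _; rewrite mxE.
have /andP[a _] := H01 k r; have /andP[_ b] := H01 k s.
by rewrite -[leRHS]mulr1; apply: ler_wpM2l.
Qed.

Lemma compat_hard (R : realFieldType) (l m : nat) (X : 'M[R]_(l, m)) r s :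
  is_partition X -> is_hard X -> compat X r s = (same_cluster X r s)%:R.
Proof.
move=> [H01 Hs] Hh; rewrite /compat mxE /same_cluster.
case: existsP => [[k0 /andP[/eqP h1 /eqP h2]] | hn].
  rewrite (bigD1 k0) //= !mxE h1 h2 mulr1 big1 ?addr0 // => k hk; rewrite mxE.
  have : \sum_(k | k != k0) X k r = 0.
    have e := Hs r; rewrite (bigD1 k0) //= h1 in e; lra.
  move/psumr_eq0P => H; rewrite H ?mul0r //.
  by move=> i _; have /andP[] := H01 i r.
apply: big1 => k _; rewrite mxE.
case: (Hh k r) => [->|e1]; first by rewrite mul0r.
case: (Hh k s) => [->|e2]; first by rewrite mulr0.
by exfalso; apply: hn; exists k; rewrite e1 e2 eqxx.
Qed.

Lemma ones_subE (R : realFieldType) m (A : 'M[R]_m) r s :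
  (onesmx R m - A) r s = 1 - A r s.
Proof. by rewrite /onesmx !mxE. Qed.

Local Open Scope nat_scope.
Lemma tri m : ((\sum_(r < m) (r : nat)) * 2 = m * (m - 1))%N.
Proof.
elim: m => [|m IH]; first by rewrite big_ord0.
rewrite big_ord_recr /= mulnDl IH; case: m {IH} => // m; nia.
Qed.

Lemma cnt m : ((\sum_(r < m) \sum_(s < m | (r < s)%N) 1%N) * 2 = m * (m - 1))%N.
Proof.
rewrite -tri; congr (_ * 2).
transitivity (\sum_(r < m) (m - r.+1)).
  apply: eq_bigr => r _.
  rewrite -(big_mkord (fun s => r < s) (fun _ => 1%N)).
  rewrite (@big_cat_nat _ _ _ r.+1 0 m _ _ (leq0n r.+1) (ltn_ord r)) /=.
  rewrite big_nat_cond big1; last by move=> i /andP[/andP[_ h] h']; lia.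
  rewrite add0n big_nat_cond (eq_bigl (fun i => (r.+1 <= i < m) && true)); last first.
    by move=> i /=; apply/idP/idP => /andP[/andP[a b] c]; rewrite a b //=; lia.
  rewrite -big_nat_cond sum_nat_const_nat; lia.
rewrite (reindex_inj rev_ord_inj) /=; apply: eq_bigr => r _.
have := ltn_ord r; lia.
Qed.

Local Open Scope ring_scope.
Theorem proposition1 (R : realFieldType) (l m : nat) (X Y : 'M[R]_(l, m)) :
  (1 <= l)%N -> (l <= m)%N ->
  is_partition X -> is_partition Y ->
  [/\ (is_hard X -> is_hard Y ->
         forall p q : bool, ((Cplus X Y p q)%:R : R) = Cmat X Y p q),
      (forall p q : bool, 0 <= Cmat X Y p q)
    & \sum_(p : bool) \sum_(q : bool) Cmat X Y p q = (m * (m - 1))%:R / 2%:R].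
Proof.
move=> _ _ PX PY; split.
- move=> hX hY p q.
  have E : forall (Z : 'M[R]_(l, m)) (b : bool), is_partition Z -> is_hard Z ->
     forall r s, (if b then compat Z else onesmx R m - compat Z) r s = (same_cluster Z r s == b)%:R.
    move=> Z b PZ HZ r s; case: b; rewrite /onesmx; first by rewrite compat_hard //; case: same_cluster.
    move: (@compat_hard _ _ _ Z r s PZ HZ); rewrite /compat !mxE => ->;
      case: same_cluster => /=; lra.
  rewrite /Cmat /chi.
  under eq_bigr => r _ do under eq_bigr => s _ do rewrite (E X p PX hX) (E Y q PY hY) -natrM.
  under eq_bigr => r _ do rewrite -natr_sum.
  rewrite -natr_sum; congr (_%:R).
  rewrite /Cplus -sum1_card big_mkcond /=.
  under [RHS]eq_bigr => r _ do rewrite big_mkcond /=.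
  rewrite pair_big /=; apply: eq_bigr => [[i j]] _ /=.
  rewrite inE /=.
  by case: (i < j)%N; case: (same_cluster X i j == p); case: (same_cluster Y i j == q).
- move=> p q; rewrite /Cmat /chi; apply: sumr_ge0 => r _; apply: sumr_ge0 => s _.
  have := @compat_bounds _ _ _ X r s PX; have := @compat_bounds _ _ _ Y r s PY.
  move=> /andP[a b] /andP[c d].
  by case: p; case: q; rewrite ?ones_subE; apply: mulr_ge0; rewrite ?subr_ge0.
- rewrite !big_bool /Cmat /chi /= -!big_split /=.
  transitivity (\sum_(r < m) \sum_(s < m | (r < s)%N) ((1%N)%:R : R)).
    apply: eq_bigr => r _; rewrite -!big_split /=; apply: eq_bigr => s _.
    rewrite /onesmx !mxE; ring.
  under eq_bigr => r _ do rewrite -natr_sum.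
  rewrite -natr_sum -cnt natrM mulfK //.
  by rewrite pnatr_eq0.
Qed.
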